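(* Let $p_1<p_2<\cdots$ be the rational primes. For each $N$, let $\{Z_i^k: i\ge1,\ 1\le k\le N\}$ be independent Bernoulli random variables with $\mathbb{P}[Z_i^k=1]=1/p_i$, and define \[ \Delta'_N:=\max_{1\le k<j\le N}\ \max_i\ Z_i^jZ_i^k\log p_i . \] Fix $\delta\in(0,\infty)$ and let $\varphi_N=\varphi_N[\delta]$ be defined as below. Then \[ \liminf_{N\to\infty}\mathbb{P}\big[\Delta'_N\ge\log\varphi_N[\delta]\big]\ge 1-e^{-\delta}. \]
   Context: For $\delta\in(0,\infty)$ and $N\ge1$, $\varphi_N=\varphi_N[\delta]>1$ is the unique real number satisfying $\int_{\varphi_N}^{2\varphi_N}\frac{N^2\,dx}{2x^2\log x}=\delta$. *)

(* Defs.v *)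
From Stdlib Require Import Reals Lra Lia ZArith Arith List Znumtheory
  Classical ClassicalDescription.
Open Scope R_scope.

Definition ind (P : Prop) : R :=
  if excluded_middle_informative P then 1 else 0.

(* A configuration z i k = Z_i^k (row i = prime index, column k = copy). *)
Definition config := nat -> nat -> bool.

Definition upd (z : config) (i k : nat) (b : bool) : config :=
  fun i' k' => if (Nat.eqb i' i && Nat.eqb k' k)%bool then b else z i' k'.

(* Expectation of f under the product of independent Bernoulli(1/p_i)
   variables placed on the (distinct) cells listed; all other cells are 0. *)
Fixpoint expect (p : nat -> nat) (cells : list (nat * nat)) (f : config -> R) : R :=
  match cells with
  | nil => f (fun _ _ => false)
  | (i, k) :: cs =>
      / INR (p i) * expect p cs (fun z => f (upd z i k true))
      + (1 - / INR (p i)) * expect p cs (fun z => f (upd z i k false))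
  end.

Definition cells (M N : nat) : list (nat * nat) := list_prod (seq 0 M) (seq 0 N).

Definition DeltaGe (p : nat -> nat) (N : nat) (c : R) (z : config) : Prop :=
  exists i k j, (k < j < N)%nat /\ z i k = true /\ z i j = true /\ c <= ln (INR (p i)).

(* Probability of {Delta'_N >= c} when only the primes p_0..p_{M-1} are used;
   the true probability is the limit as M -> infinity. *)
Definition probM (p : nat -> nat) (N M : nat) (c : R) : R :=
  expect p (cells M N) (fun z => ind (DeltaGe p N c z)).

Definition is_phi (delta : R) (N : nat) (v : R) : Prop :=
  1 < v /\
  exists pr : Riemann_integrable (fun x => (INR N) ^ 2 / (2 * x ^ 2 * ln x)) v (2 * v),
    RiemannInt pr = delta.

(* Main.v *)
Require Import Defs.
From Stdlib Require Import Reals Lra Lia ZArith Arith List Znumtheory.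
From Stdlib Require Import Classical ClassicalDescription FunctionalExtensionality.
From mathcomp Require ssreflect ssrbool ssrfun eqtype ssrnat div prime bigop.
From Coquelicot Require Coquelicot.
Open Scope R_scope.
Notation ind := Defs.ind.

Section Prob.
Variable p : nat -> nat.
Hypothesis Hp1 : forall i, 1 <= INR (p i).

Fixpoint expectB (cs : list (nat * nat)) (z0 : config) (f : config -> R) : R :=
  match cs with
  | nil => f z0
  | (i, k) :: cs' =>
      / INR (p i) * expectB cs' z0 (fun z => f (upd z i k true))
      + (1 - / INR (p i)) * expectB cs' z0 (fun z => f (upd z i k false))
  end.

Lemma expect_B cs f : expect p cs f = expectB cs (fun _ _ => false) f.
Proof. revert f; induction cs as [|[i k] cs IH]; intros f; simpl; auto.
  rewrite !IH; auto. Qed.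

Lemma w_bounds i : 0 < / INR (p i) <= 1.
Proof. pose proof (Hp1 i). split. apply Rinv_0_lt_compat; lra.
  rewrite <- Rinv_1. apply Rinv_le_contravar; lra. Qed.

Lemma expectB_rel_le (Rel : config -> config -> Prop) cs :
  (forall i k, In (i, k) cs -> forall z z' b, Rel z z' -> Rel (upd z i k b) (upd z' i k b)) ->
  forall f g z0 z1, Rel z0 z1 -> (forall z z', Rel z z' -> f z <= g z') ->
  expectB cs z0 f <= expectB cs z1 g.
Proof.
  induction cs as [|[i k] cs IH]; intros Hpres f g z0 z1 H0 Hfg; simpl; auto.
  pose proof (w_bounds i).
  assert (Hp' : forall i0 k0, In (i0, k0) cs -> forall z z' b, Rel z z' -> Rel (upd z i0 k0 b) (upd z' i0 k0 b)).
  { intros; apply Hpres; simpl; auto. }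
  apply Rplus_le_compat; apply Rmult_le_compat_l; try lra;
  apply IH; auto; intros z z' Hz; apply Hfg; apply Hpres; simpl; auto.
Qed.

Lemma expectB_ext cs z0 f g : (forall z, f z = g z) -> expectB cs z0 f = expectB cs z0 g.
Proof. intros H. apply Rle_antisym; apply (expectB_rel_le eq); intros; subst; auto;
  rewrite H; lra. Qed.

Lemma expectB_ext_inv (Inv : config -> Prop) cs z0 f g :
  (forall i k, In (i, k) cs -> forall z b, Inv z -> Inv (upd z i k b)) ->
  Inv z0 -> (forall z, Inv z -> f z = g z) -> expectB cs z0 f = expectB cs z0 g.
Proof. intros Hp H0 H. apply Rle_antisym;
  apply (expectB_rel_le (fun z z' => z = z' /\ Inv z)); auto;
  try (intros i k Hi z z' b [-> Hz]; split; auto);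
  intros z z' [-> Hz]; rewrite H; auto; lra. Qed.

Lemma expectB_const cs z0 a : expectB cs z0 (fun _ => a) = a.
Proof. induction cs as [|[i k] cs IH]; simpl; auto. rewrite !IH. ring. Qed.

Lemma expectB_plus cs z0 f g :
  expectB cs z0 (fun z => f z + g z) = expectB cs z0 f + expectB cs z0 g.
Proof. revert f g; induction cs as [|[i k] cs IH]; intros f g; simpl; auto.
  rewrite !IH. ring. Qed.

Lemma expectB_scal cs z0 a f :
  expectB cs z0 (fun z => a * f z) = a * expectB cs z0 f.
Proof. revert f; induction cs as [|[i k] cs IH]; intros f; simpl; auto.
  rewrite !IH. ring. Qed.

Lemma expectB_app cs1 cs2 z0 f :
  expectB (cs1 ++ cs2) z0 f = expectB cs2 z0 (fun z2 => expectB cs1 z2 f).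
Proof. revert f; induction cs1 as [|[i k] cs IH]; intros f; simpl; auto.
  rewrite !IH. rewrite <- expectB_scal, <- (expectB_scal _ _ (1 - _)), <- expectB_plus.
  reflexivity. Qed.

Lemma expectB_mul_inv cs z0 f g :
  (forall i k, In (i, k) cs -> forall z b, g (upd z i k b) = g z) ->
  expectB cs z0 (fun z => f z * g z) = expectB cs z0 f * g z0.
Proof. revert f g; induction cs as [|[i k] cs IH]; intros f g Hg; simpl; auto.
  assert (Hg' : forall i0 k0, In (i0, k0) cs -> forall z b, g (upd z i0 k0 b) = g z)
    by (intros; apply Hg; simpl; auto).
  rewrite (expectB_ext cs z0 (fun z => f (upd z i k true) * g (upd z i k true))
     (fun z => f (upd z i k true) * g z)) by (intros; rewrite Hg; simpl; auto).
  rewrite (expectB_ext cs z0 (fun z => f (upd z i k false) * g (upd z i k false))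
     (fun z => f (upd z i k false) * g z)) by (intros; rewrite Hg; simpl; auto).
  rewrite !IH; auto. ring. Qed.


End Prob.

Definition row (i n : nat) : list (nat * nat) := map (fun k => (i, k)) (seq 0 n).

Lemma row_S i n : row i (S n) = row i n ++ (i, n) :: nil.
Proof. unfold row. rewrite seq_S, map_app. reflexivity. Qed.

Lemma in_row i n i' k : In (i', k) (row i n) -> i' = i /\ (k < n)%nat.
Proof. unfold row. rewrite in_map_iff. intros [x [Hx Hin]]. inversion Hx; subst.
  apply in_seq in Hin. split; auto; lia. Qed.

Lemma list_prod_app {A B : Type} (l1 l2 : list A) (l : list B) :
  list_prod (l1 ++ l2) l = list_prod l1 l ++ list_prod l2 l.
Proof. induction l1; simpl; auto. rewrite IHl1, app_assoc. auto. Qed.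

Lemma cells_S M N : cells (S M) N = cells M N ++ row M N.
Proof. unfold cells. rewrite seq_S, list_prod_app. simpl. rewrite app_nil_r.
  reflexivity. Qed.

Lemma in_cells M N i k : In (i, k) (cells M N) -> (i < M)%nat.
Proof. unfold cells. rewrite in_prod_iff. intros [H _]. apply in_seq in H. lia. Qed.

Lemma ind_iff (P0 Q0 : Prop) : (P0 <-> Q0) -> ind P0 = ind Q0.
Proof. intros H. unfold ind. destruct (excluded_middle_informative P0);
  destruct (excluded_middle_informative Q0); tauto. Qed.

Lemma ind_true (P0 : Prop) : P0 -> ind P0 = 1.
Proof. unfold ind. destruct (excluded_middle_informative P0); tauto. Qed.
Lemma ind_false (P0 : Prop) : ~ P0 -> ind P0 = 0.
Proof. unfold ind. destruct (excluded_middle_informative P0); tauto. Qed.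
Lemma ind_bounds (P0 : Prop) : 0 <= ind P0 <= 1.
Proof. unfold ind. destruct (excluded_middle_informative P0); lra. Qed.

Definition NoneR (i n : nat) (z : config) : Prop := forall k, (k < n)%nat -> z i k = false.
Definition Few (i n : nat) (z : config) : Prop :=
  forall k j, (k < j < n)%nat -> ~ (z i k = true /\ z i j = true).

Lemma upd_same z i k b : upd z i k b i k = b.
Proof. unfold upd. rewrite !Nat.eqb_refl. reflexivity. Qed.
Lemma upd_other z i k b i' k' : (i' <> i \/ k' <> k) -> upd z i k b i' k' = z i' k'.
Proof. intros H. unfold upd. destruct H as [H|H];
  apply Nat.eqb_neq in H; rewrite H; simpl; auto; rewrite Bool.andb_false_r; auto. Qed.

Section Rows.
Variable p : nat -> nat.
Hypothesis Hp1 : forall i, 1 <= INR (p i).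

Fixpoint P1 (w : R) (n : nat) : R :=
  match n with O => 1 | S n' => w * (1 - w) ^ n' + (1 - w) * P1 w n' end.

Lemma inv_row i n b : forall i' k, In (i', k) (row i n) -> forall z b', z i n = b -> upd z i' k b' i n = b.
Proof. intros i' k Hin z b' Hz. apply in_row in Hin. destruct Hin as [-> Hk].
  rewrite upd_other; auto. right; lia. Qed.

Lemma expect_none i n : forall z0,
  expectB p (row i n) z0 (fun z => ind (NoneR i n z)) = (1 - / INR (p i)) ^ n.
Proof.
  induction n; intros z0.
  - simpl. apply ind_true. intros k Hk; lia.
  - rewrite row_S, expectB_app. simpl.
    rewrite (expectB_ext_inv p Hp1 (fun z => z i n = true) _ (upd z0 i n true) _ (fun _ => 0)); auto.
    2: { intros i' k Hin z b Hz; apply (inv_row i n true i' k Hin z b Hz). }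
    2: { apply upd_same. }
    2: { intros z Hz. apply ind_false. intros H. specialize (H n ltac:(lia)). congruence. }
    rewrite (expectB_ext_inv p Hp1 (fun z => z i n = false) _ (upd z0 i n false) _ (fun z => ind (NoneR i n z))); auto.
    2: { intros i' k Hin z b Hz; apply (inv_row i n false i' k Hin z b Hz). }
    2: { apply upd_same. }
    2: { intros z Hz. apply ind_iff. split; intros H k Hk; auto.
         destruct (Nat.eq_dec k n); subst; auto. apply H; lia. }
    rewrite expectB_const, IHn. ring.
Qed.

Lemma expect_few i n : forall z0,
  expectB p (row i n) z0 (fun z => ind (Few i n z)) = P1 (/ INR (p i)) n.
Proof.
  induction n; intros z0.
  - simpl. apply ind_true. intros k j Hk; lia.
  - rewrite row_S, expectB_app. simpl.
    rewrite (expectB_ext_inv p Hp1 (fun z => z i n = true) _ (upd z0 i n true) _ (fun z => ind (NoneR i n z))); auto.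
    2: { intros i' k Hin z b Hz; apply (inv_row i n true i' k Hin z b Hz). }
    2: { apply upd_same. }
    2: { intros z Hz. apply ind_iff. split.
         - intros H k Hk. destruct (z i k) eqn:E; auto. exfalso. apply (H k n); auto; lia.
         - intros H k j Hkj [H1 H2]. destruct (Nat.eq_dec j n).
           + subst. rewrite H in H1; [discriminate| lia].
           + rewrite H in H2; [discriminate| lia]. }
    rewrite (expectB_ext_inv p Hp1 (fun z => z i n = false) _ (upd z0 i n false) _ (fun z => ind (Few i n z))); auto.
    2: { intros i' k Hin z b Hz; apply (inv_row i n false i' k Hin z b Hz). }
    2: { apply upd_same. }
    2: { intros z Hz. apply ind_iff. split; intros H k j Hkj [H1 H2].
         - apply (H k j); auto; lia.
         - destruct (Nat.eq_dec j n). subst; congruence. apply (H k j); auto; lia. }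
    rewrite expect_none, IHn. ring.
Qed.
End Rows.

Section MainProb.
Variable p : nat -> nat.
Hypothesis Hp1 : forall i, 1 <= INR (p i).
Variable N : nat.
Variable c : R.

Definition gfac (m : nat) (z : config) : R :=
  if Rle_dec c (ln (INR (p m))) then ind (Few m N z) else 1.
Fixpoint QP (M : nat) (z : config) : R :=
  match M with O => 1 | S m => QP m z * gfac m z end.
Definition vfac (m : nat) : R :=
  if Rle_dec c (ln (INR (p m))) then P1 (/ INR (p m)) N else 1.
Fixpoint VP (M : nat) : R :=
  match M with O => 1 | S m => VP m * vfac m end.

Lemma gfac_inv m i k b z : i <> m -> gfac m (upd z i k b) = gfac m z.
Proof. intros H. unfold gfac. destruct (Rle_dec _ _); auto. apply ind_iff.
  unfold Few. split; intros H0 k0 j0 Hkj; rewrite ?upd_other by auto; specialize (H0 k0 j0 Hkj); rewrite ?upd_other in H0 by auto; auto. Qed.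

Lemma expect_QP M : forall z0, expectB p (cells M N) z0 (QP M) = VP M.
Proof.
  induction M; intros z0; simpl.
  - reflexivity.
  - rewrite cells_S, expectB_app.
    rewrite (expectB_ext p Hp1 _ _ _ (fun z2 => VP M * gfac M z2)).
    2: { intros z2. rewrite expectB_mul_inv, IHM; auto.
         intros i k Hin z b. apply gfac_inv. apply in_cells in Hin. lia. }
    rewrite expectB_scal. f_equal. unfold gfac, vfac.
    destruct (Rle_dec _ _).
    + apply expect_few; auto.
    + apply expectB_const.
Qed.

Lemma QP_nonneg M z : 0 <= QP M z.
Proof. induction M; simpl. lra. apply Rmult_le_pos; auto. unfold gfac.
  destruct (Rle_dec _ _). apply ind_bounds. lra. Qed.

Lemma QP_one M z : ~ DeltaGe p N c z -> QP M z = 1.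
Proof. intros H. induction M; simpl; auto. rewrite IHM. unfold gfac.
  destruct (Rle_dec _ _); [|ring]. rewrite ind_true. ring.
  intros k j Hkj [H1 H2]. apply H. exists M, k, j. auto. Qed.

Lemma one_minus_D_le M z : 1 - ind (DeltaGe p N c z) <= QP M z.
Proof. destruct (classic (DeltaGe p N c z)) as [H|H].
  - rewrite ind_true by auto. pose proof (QP_nonneg M z). lra.
  - rewrite ind_false, QP_one by auto. lra. Qed.

Lemma probM_lower M : 1 - VP M <= probM p N M c.
Proof.
  unfold probM. rewrite expect_B.
  rewrite <- (expect_QP M (fun _ _ => false)).
  assert (H : expectB p (cells M N) (fun _ _ => false) (fun z => 1 - ind (DeltaGe p N c z))
             <= expectB p (cells M N) (fun _ _ => false) (QP M)).
  { apply (expectB_rel_le p Hp1 eq); auto. intros; subst; auto.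
    intros z z' ->. apply one_minus_D_le. }
  rewrite (expectB_ext p Hp1 _ _ _ (fun z => 1 + (-1) * ind (DeltaGe p N c z))) in H
    by (intros; ring).
  rewrite expectB_plus, expectB_const, expectB_scal in H. lra.
Qed.

Definition cle (z z' : config) : Prop := forall i k, z i k = true -> z' i k = true.

Lemma DeltaGe_mono z z' : cle z z' -> ind (DeltaGe p N c z) <= ind (DeltaGe p N c z').
Proof. intros H. destruct (classic (DeltaGe p N c z)) as [HD|HD].
  - rewrite (ind_true (DeltaGe p N c z')). rewrite ind_true; auto; lra.
    destruct HD as (i & k & j & H1 & H2 & H3 & H4). exists i, k, j; auto.
  - rewrite ind_false by auto. apply ind_bounds. Qed.

Lemma probM_mono M : probM p N M c <= probM p N (S M) c.
Proof.
  unfold probM. rewrite !expect_B, cells_S, expectB_app.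
  rewrite <- (expectB_const p (row M N) (fun _ _ => false)) at 1.
  apply (expectB_rel_le p Hp1 eq); auto. intros; subst; auto.
  intros z z' ->. apply (expectB_rel_le p Hp1 cle).
  - intros i k _ z1 z2 b H i' k'. unfold upd. destruct (_ && _)%bool; auto.
  - intros i k H; discriminate.
  - intros; apply DeltaGe_mono; auto.
Qed.

Lemma probM_le1 M : probM p N M c <= 1.
Proof. unfold probM. rewrite expect_B.
  rewrite <- (expectB_const p (cells M N) (fun _ _ => false) 1).
  apply (expectB_rel_le p Hp1 eq); auto. intros; subst; auto.
  intros z z' ->. apply ind_bounds. Qed.

End MainProb.

Lemma exp_ge_1x x : 1 + x <= exp x.
Proof. destruct (Req_dec x 0). subst. rewrite exp_0. lra. left; apply exp_ineq1; auto. Qed.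

Definition Lfun (n : nat) (w : R) : R := INR n * (INR n - 1) / 2 * w ^ 2 * (1 - INR n * w).

Lemma bonf w n : 0 <= w <= 1 -> (1 - w) ^ n <= 1 - INR n * w + INR n * (INR n - 1) / 2 * w ^ 2.
Proof. intros Hw. induction n. simpl. lra.
  rewrite S_INR. simpl pow. apply Rle_trans with ((1 - w) * (1 - INR n * w + INR n * (INR n - 1) / 2 * w ^ 2)).
  apply Rmult_le_compat_l; lra. assert (HC : 0 <= INR n * (INR n - 1)).
  { destruct n. simpl; lra. rewrite S_INR. pose proof (pos_INR n). nra. }
  assert (0 <= INR n * (INR n - 1) / 2 * w ^ 3) by (apply Rmult_le_pos; [lra| apply pow_le; lra]).
  simpl in *. nra. Qed.

Lemma P1_bounds w n : 0 <= w <= 1 -> 0 <= P1 w n <= 1.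
Proof. intros Hw. induction n; simpl. lra. pose proof (pow_le (1 - w) n ltac:(lra)).
  assert ((1 - w) ^ n <= 1).
  { clear IHn. induction n; simpl. lra. pose proof (pow_le (1 - w) n ltac:(lra)). nra. }
  split; nra. Qed.

Lemma P1_le w n : 0 <= w <= 1 -> P1 w n <= 1 - Lfun n w.
Proof. intros Hw. unfold Lfun. induction n. simpl. lra.
  simpl P1. pose proof (bonf w n Hw). rewrite S_INR.
  apply Rle_trans with (w * (1 - INR n * w + INR n * (INR n - 1) / 2 * w ^ 2) + (1 - w) * (1 - INR n * (INR n - 1) / 2 * w ^ 2 * (1 - INR n * w))).
  apply Rplus_le_compat; apply Rmult_le_compat_l; lra.
  assert (HC : 0 <= INR n * (INR n - 1)).
  { destruct n. simpl; lra. rewrite S_INR. pose proof (pos_INR n). nra. }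
  assert (HC2 : INR n * (INR n - 1) / 2 <= INR n * INR n + INR n) by (pose proof (pos_INR n); nra).
  assert (Hw3 : 0 <= w ^ 3) by (apply pow_le; lra).
  assert (Hk : 0 <= w * w ^ 2 * (INR n * INR n + INR n - INR n * (INR n - 1) / 2 * (1 - INR n * w))).
  { apply Rmult_le_pos. apply Rmult_le_pos; [lra|apply pow_le; lra].
    pose proof (pos_INR n). destruct (Rle_dec 0 (1 - INR n * w)).
    assert (INR n * (INR n - 1) / 2 * (1 - INR n * w) <= INR n * (INR n - 1) / 2 * 1)
      by (apply Rmult_le_compat_l; nra). lra.
    assert (INR n * (INR n - 1) / 2 * (1 - INR n * w) <= 0).
    { nra. } nra. }
  assert (E : 1 - (INR n + 1) * (INR n + 1 - 1) / 2 * w ^ 2 * (1 - (INR n + 1) * w) -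
  (w * (1 - INR n * w + INR n * (INR n - 1) / 2 * w ^ 2) +
  (1 - w) * (1 - INR n * (INR n - 1) / 2 * w ^ 2 * (1 - INR n * w))) = w * w ^ 2 * (INR n * INR n + INR n - INR n * (INR n - 1) / 2 * (1 - INR n * w))) by field.
  lra. Qed.

Section VPB.
Variable p : nat -> nat.
Hypothesis Hp1 : forall i, 1 <= INR (p i).
Variable N : nat.
Variable c : R.

Definition lfac (m : nat) : R :=
  if Rle_dec c (ln (INR (p m))) then Lfun N (/ INR (p m)) else 0.
Fixpoint SL (M : nat) : R := match M with O => 0 | S m => SL m + lfac m end.

Lemma VP_le M : 0 <= VP p N c M <= exp (- SL M).
Proof. induction M; simpl. rewrite Ropp_0, exp_0. lra.
  rewrite Ropp_plus_distr, exp_plus.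
  assert (H : 0 <= vfac p N c M <= exp (- lfac M)).
  { unfold vfac, lfac. pose proof (w_bounds p Hp1 M). destruct (Rle_dec _ _).
    - pose proof (P1_bounds (/ INR (p M)) N ltac:(lra)).
      pose proof (P1_le (/ INR (p M)) N ltac:(lra)).
      pose proof (exp_ge_1x (- Lfun N (/ INR (p M)))). lra.
    - rewrite Ropp_0, exp_0. lra. }
  split. apply Rmult_le_pos; lra.
  apply Rmult_le_compat; lra. Qed.

Lemma probM_lower_exp M : 1 - exp (- SL M) <= probM p N M c.
Proof. pose proof (VP_le M). pose proof (probM_lower p Hp1 N c M). lra. Qed.

End VPB.

Fixpoint sumR (f : nat -> R) (n : nat) : R :=
  match n with O => 0 | S m => sumR f m + f m end.

Lemma sumR_ext f g n : (forall i, (i < n)%nat -> f i = g i) -> sumR f n = sumR g n.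
Proof. induction n; intros H; simpl; auto. rewrite IHn, H; auto. Qed.
Lemma sumR_plus f g n : sumR (fun i => f i + g i) n = sumR f n + sumR g n.
Proof. induction n; simpl; auto. lra. rewrite IHn. ring. Qed.
Lemma sumR_scal a f n : sumR (fun i => a * f i) n = a * sumR f n.
Proof. induction n; simpl; auto. ring. rewrite IHn. ring. Qed.
Lemma sumR_opp f n : sumR (fun i => - f i) n = - sumR f n.
Proof. induction n; simpl; auto. ring. rewrite IHn. ring. Qed.
Lemma sumR_le f g n : (forall i, (i < n)%nat -> f i <= g i) -> sumR f n <= sumR g n.
Proof. induction n; intros H; simpl. lra. apply Rplus_le_compat; auto. Qed.
Lemma sumR_zero n : sumR (fun _ => 0) n = 0.
Proof. induction n; simpl; auto; lra. Qed.
Lemma sumR_nonneg f n : (forall i, (i < n)%nat -> 0 <= f i) -> 0 <= sumR f n.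
Proof. intros H. rewrite <- (sumR_zero n). apply sumR_le; auto. Qed.
Lemma sumR_const a n : sumR (fun _ => a) n = INR n * a.
Proof. induction n. simpl; ring. simpl sumR. rewrite IHn, S_INR. ring. Qed.
Lemma sumR_mono f n m : (forall i, 0 <= f i) -> (n <= m)%nat -> sumR f n <= sumR f m.
Proof. intros H Hnm. induction Hnm. lra. simpl. specialize (H m). lra. Qed.
Lemma sumR_split f a b : (a <= b)%nat -> sumR f b = sumR f a + sumR (fun i => f (a + i)%nat) (b - a).
Proof. intros H. induction H. rewrite Nat.sub_diag. simpl; ring.
  rewrite Nat.sub_succ_l by auto. simpl. rewrite IHle. replace (a + (m - a))%nat with m by lia. ring. Qed.

Definition lnfact (n : nat) : R := sumR (fun m => ln (INR (S m))) n.

Module NT.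
Import ssreflect ssrbool ssrfun eqtype ssrnat div prime bigop.
Definition isp (n : nat) : bool := prime n.
End NT.
Definition isp := NT.isp.

Definition Leg (n P K : nat) : R :=
  sumR (fun q => if isp q then ln (INR q) * sumR (fun k => INR (Nat.div n (Nat.pow q (S k)))) K else 0) P.

Module NT2.
Import ssreflect ssrbool ssrfun eqtype ssrnat div prime bigop.
Local Open Scope nat_scope.

Lemma divnE' m d : divn m d = Nat.div m d.
Proof.
  case: d => [|d]. by rewrite divn0.
  apply: (Nat.div_unique m d.+1 (divn m d.+1) (modn m d.+1)).
  - apply/ltP. by rewrite ltn_mod.
  - rewrite {1}(divn_eq m d.+1). rewrite -plusE -multE. lia.
Qed.

Lemma expnE' m n : expn m n = Nat.pow m n.
Proof. elim: n => [|n IH]. by rewrite expn0. by rewrite expnS IH -multE /= Nat.mul_comm. Qed.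


Lemma prod_decomp m P : 0 < m -> m < P -> \prod_(0 <= q < P) q ^ logn q m = m.
Proof.
  move=> m0 mP. case: P mP => [|P] // mP.
  rewrite -{2}(partnT m0) (@widen_partn P predT m) //.
Qed.

Lemma ln_prod m P : ln (INR (\prod_(0 <= q < P) q ^ logn q m)) =
  sumR (fun q => if isp q then (ln (INR q) * INR (logn q m))%R else 0%R) P.
Proof.
  elim: P => [|P IH]. by rewrite big_geq //= ln_1.
  rewrite big_nat_recr //= -multE mult_INR ln_mult; last first.
  - apply: lt_0_INR; apply/ltP; exact: pfactor_gt0.
  - apply: lt_0_INR; apply/ltP; apply: prodn_gt0 => i; exact: pfactor_gt0.
  rewrite IH. f_equal.
  rewrite /isp /NT.isp. case pP: (prime P).
  - rewrite expnE' pow_INR ln_pow. by rewrite Rmult_comm.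
    apply: lt_0_INR; apply/ltP; exact: prime_gt0.
  - by rewrite lognE pP expn0 /= ln_1.
Qed.

Lemma ln_decomp m P : 0 < m -> m < P ->
  ln (INR m) = sumR (fun q => if isp q then (ln (INR q) * INR (logn q m))%R else 0%R) P.
Proof. move=> m0 mP. by rewrite -ln_prod prod_decomp. Qed.

Lemma logn_sum p m K : prime p -> 0 < m -> m <= K ->
  INR (logn p m) = sumR (fun k => if p ^ k.+1 %| m then 1%R else 0%R) K.
Proof.
  move=> pp m0 mK.
  have H : forall K, sumR (fun k => if p ^ k.+1 %| m then 1%R else 0%R) K = INR (minn K (logn p m)).
  { elim=> [|K' IH]; first by rewrite min0n.
    rewrite /= IH pfactor_dvdn //. case: (ltnP K' (logn p m)) => h.
    - by rewrite (minn_idPl h) S_INR.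
    - by rewrite (minn_idPr (leqW h)) Rplus_0_r. }
  rewrite H (minn_idPr _) //. apply: ltnW; apply: leq_trans (ltn_logl _ m0) mK.
Qed.


Lemma Leg_S n P K : n.+1 < P -> n.+1 <= K -> Leg n.+1 P K = (Leg n P K + ln (INR n.+1))%R.
Proof.
  move=> hP hK. rewrite /Leg (@ln_decomp n.+1 P) // -sumR_plus.
  apply: sumR_ext => q _. rewrite /isp /NT.isp. case qP: (prime q); last by rewrite Rplus_0_r.
  rewrite (@logn_sum q n.+1 K) // -Rmult_plus_distr_l -sumR_plus. f_equal.
  apply: sumR_ext => k _. rewrite -!divnE' -!expnE' divnS; last by rewrite expn_gt0 prime_gt0.
  rewrite plus_INR Rplus_comm. case: (q ^ k.+1 %| n.+1) => //=.
Qed.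

Lemma legendre n P K : n < P -> n <= K -> lnfact n = Leg n P K.
Proof.
  elim: n => [|n IH] hP hK.
  - rewrite /lnfact /= /Leg. symmetry. rewrite -(sumR_zero P). apply: sumR_ext => q _.
    case: (isp q) => //. rewrite (@sumR_ext _ (fun _ => 0%R)); first by rewrite sumR_zero Rmult_0_r.
    move=> k _. by case: (Nat.pow q k.+1).
    by rewrite sumR_zero.
  - have hP' : n < P by apply: ltnW.
    have hK' : n <= K by apply: ltnW.
    rewrite Leg_S // -IH //.
Qed.

End NT2.

Module NT3.
Import ssreflect ssrbool ssrfun eqtype ssrnat div prime.

Lemma dvd_bridge d p : (0 < p)%N -> (d %| p) = true <-> (Z.of_nat d | Z.of_nat p)%Z.
Proof.
  move=> p0. split.
  - move/dvdnP=> [k ->]. exists (Z.of_nat k). rewrite -multE Nat2Z.inj_mul. by [].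
  - move=> [c Hc]. apply/dvdnP. exists (Z.to_nat c).
    have hp : (0 < Z.of_nat p)%Z by move/ltP: p0 => p0; lia.
    have hc : (0 <= c)%Z by nia.
    apply: Nat2Z.inj. rewrite -multE Nat2Z.inj_mul Z2Nat.id //.
Qed.

Lemma prime_bridge n : Znumtheory.prime (Z.of_nat n) <-> isp n = true.
Proof.
  rewrite /isp /NT.isp. split.
  - move/prime_alt => [H1 H2]. apply/primeP. have n1 : (1 < n)%N by apply/ltP; lia.
    split => // d dn. have n0 : (0 < n)%N by apply: ltnW.
    have dle := dvdn_leq n0 dn.
    have d0 : (0 < d)%N. { case: d dn {dle} => // /dvdnP [k]. rewrite muln0 => Hk. by rewrite Hk in n0. }
    rewrite /=. apply/orP. move/leP: dle => dle. move/ltP: d0 => d0.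
    case: (Nat.eq_dec d 1) => [->|e1]; first by left.
    case: (Nat.eq_dec d n) => [->|e2]; first by right.
    exfalso. apply: (H2 (Z.of_nat d)). lia. by apply/dvd_bridge.
  - move/primeP=> [n1 Hd]. apply/prime_alt. split. move/ltP: n1 => n1; lia.
    move=> m [hm1 hm2] hdiv.
    have hmz : m = Z.of_nat (Z.to_nat m) by rewrite Z2Nat.id //; lia.
    rewrite hmz in hdiv. have n0 : (0 < n)%N by apply: ltnW.
    move/(dvd_bridge (Z.to_nat m) n n0): hdiv => hdiv. move: (Hd _ hdiv) => /orP [/eqP e|/eqP e]; lia.
Qed.

Lemma isp_ge2 n : isp n = true -> le 2 n.
Proof. rewrite /isp /NT.isp => H. have h := prime_gt1 H. move/ltP: h. lia. Qed.

End NT3.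

Lemma legendre' n P K : (n < P)%nat -> (n <= K)%nat -> lnfact n = Leg n P K.
Proof. intros. apply NT2.legendre; [apply (ssrbool.introT ssrnat.ltP) | apply (ssrbool.introT ssrnat.leP)]; auto. Qed.
Definition prime_bridge := NT3.prime_bridge.
Definition isp_ge2 := NT3.isp_ge2.

Lemma ln_le x y : 0 < x -> x <= y -> ln x <= ln y.
Proof. intros Hx Hxy. destruct Hxy. left; apply ln_increasing; auto. subst; lra. Qed.
Lemma ln_le_xm1 x : 0 < x -> ln x <= x - 1.
Proof. intros Hx. pose proof (exp_ineq1_le (ln x)). rewrite exp_ln in H by auto. lra. Qed.
Lemma ln_pos_1 x : 1 <= x -> 0 <= ln x.
Proof. intros. rewrite <- ln_1. apply ln_le; lra. Qed.

Lemma nu_small r : (r < 30)%nat -> (r/2 + r/3 + r/5 <= r + r/30 <= r/2 + r/3 + r/5 + 1)%nat.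
Proof. intros Hr. do 30 (destruct r as [|r]; [simpl; lia|]). lia. Qed.
Lemma nu_all q : (q/2 + q/3 + q/5 <= q + q/30 <= q/2 + q/3 + q/5 + 1)%nat.
Proof.
  pose proof (Nat.div_mod_eq q 30) as Hq. set (t := (q / 30)%nat) in *. set (r := (q mod 30)%nat) in *.
  assert (Hr : (r < 30)%nat) by (apply Nat.mod_upper_bound; lia).
  assert (E2 : (q / 2 = 15 * t + r / 2)%nat) by (rewrite Hq; replace (30 * t + r)%nat with ((15 * t) * 2 + r)%nat by lia; apply Nat.div_add_l; lia).
  assert (E3 : (q / 3 = 10 * t + r / 3)%nat) by (rewrite Hq; replace (30 * t + r)%nat with ((10 * t) * 3 + r)%nat by lia; apply Nat.div_add_l; lia).
  assert (E5 : (q / 5 = 6 * t + r / 5)%nat) by (rewrite Hq; replace (30 * t + r)%nat with ((6 * t) * 5 + r)%nat by lia; apply Nat.div_add_l; lia).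
  assert (E30 : (r / 30 = 0)%nat) by (apply Nat.div_small; lia).
  rewrite E2, E3, E5. pose proof (nu_small r Hr). lia.
Qed.

Definition Fnu (q : nat) : R :=
  INR q - INR (q / 2) - INR (q / 3) - INR (q / 5) + INR (q / 30).

Lemma Fnu_bounds q : 0 <= Fnu q <= 1.
Proof. pose proof (nu_all q) as [H1 H2]. apply le_INR in H1. apply le_INR in H2.
  rewrite !plus_INR in H1, H2. unfold Fnu. change (INR 1) with 1 in H2. rewrite plus_INR in H2. lra. Qed.

Lemma Fnu_0 : Fnu 0 = 0.
Proof. unfold Fnu. simpl. lra. Qed.

Lemma Fnu_1 q : (1 <= q <= 5)%nat -> Fnu q = 1.
Proof. intros H. unfold Fnu.
  assert (q = 1 \/ q = 2 \/ q = 3 \/ q = 4 \/ q = 5)%nat as Hq by lia.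
  destruct Hq as [->|[->|[->|[->| ->]]]]; simpl; lra. Qed.

Lemma Fnu_le_ind n d : (d <> 0)%nat -> Fnu (n / d) <= if Nat.leb d n then 1 else 0.
Proof. intros Hd. destruct (Nat.leb d n) eqn:E. apply Fnu_bounds.
  apply Nat.leb_gt in E. rewrite Nat.div_small by lia. rewrite Fnu_0. lra. Qed.

Definition theta (n : nat) : R := sumR (fun q => if isp q then ln (INR q) else 0) (S n).

Definition Scheb (n : nat) : R :=
  lnfact n - lnfact (n / 2) - lnfact (n / 3) - lnfact (n / 5) + lnfact (n / 30).

Lemma div_le' n j : (n / j <= n)%nat.
Proof. destruct j. simpl. lia. apply Nat.div_le_upper_bound. lia. nia. Qed.

Lemma divdiv n j Q : (j <> 0)%nat -> (Q <> 0)%nat -> (n / j / Q = n / Q / j)%nat.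
Proof. intros. rewrite !Nat.div_div by auto. rewrite Nat.mul_comm. auto. Qed.

Lemma Scheb_leg n : Scheb n =
  sumR (fun q => if isp q then ln (INR q) * sumR (fun k => Fnu (n / Nat.pow q (S k))) n else 0) (S n).
Proof.
  unfold Scheb. rewrite !(fun m => legendre' m (S n) n); try (pose proof (div_le' n 2); pose proof (div_le' n 3);
    pose proof (div_le' n 5); pose proof (div_le' n 30); lia).
  unfold Leg, Rminus. rewrite <- !sumR_opp, <- !sumR_plus. apply sumR_ext. intros q Hq.
  destruct (isp q) eqn:E; [|ring].
  pose proof (isp_ge2 q E).
  assert (HQ : forall k, Nat.pow q (S k) <> 0%nat) by (intros; apply Nat.pow_nonzero; lia).
  rewrite !Ropp_mult_distr_r, <- !Rmult_plus_distr_l. f_equal.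
  rewrite <- !sumR_opp, <- !sumR_plus. apply sumR_ext. intros k Hk. unfold Fnu.
  rewrite !(divdiv n _ (Nat.pow q (S k))) by auto. ring.
Qed.

Lemma sumR_ge_term f n i : (forall j, 0 <= f j) -> (i < n)%nat -> f i <= sumR f n.
Proof. intros H Hi. induction n. lia. simpl. destruct (Nat.eq_dec i n).
  subst. pose proof (sumR_nonneg f n ltac:(intros; auto)). lra.
  pose proof (H n). assert (f i <= sumR f n) by (apply IHn; lia). lra. Qed.

Lemma ln_nonneg_nat q : (1 <= q)%nat -> 0 <= ln (INR q).
Proof. intros Hq. destruct q. lia.
  rewrite <- ln_1. apply ln_le. lra. rewrite S_INR. pose proof (pos_INR q). lra. Qed.

Lemma sumR_trunc f m n : (m <= n)%nat ->
  sumR f (S m) = sumR (fun q => if Nat.leb q m then f q else 0) (S n).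
Proof. intros H. induction H.
  - apply sumR_ext. intros i Hi. replace (Nat.leb i m) with true; auto. symmetry; apply Nat.leb_le; lia.
  - rewrite IHle. replace (sumR _ (S (S m0))) with (sumR (fun q => if Nat.leb q m then f q else 0) (S m0) + (if Nat.leb (S m0) m then f (S m0) else 0)) by reflexivity.
    replace (Nat.leb (S m0) m) with false. ring.
    symmetry; apply Nat.leb_gt; lia. Qed.

Lemma theta_diff n : theta n - theta (n / 6) =
  sumR (fun q => if isp q then (if Nat.leb q (n / 6) then 0 else ln (INR q)) else 0) (S n).
Proof. unfold theta. rewrite (sumR_trunc _ (n / 6) n) by (apply div_le').
  unfold Rminus. rewrite <- sumR_opp, <- sumR_plus. apply sumR_ext. intros q _.
  destruct (Nat.leb q (n/6)); destruct (isp q); ring. Qed.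

Lemma theta_le_Scheb n : theta n - theta (n / 6) <= Scheb n.
Proof. rewrite theta_diff, Scheb_leg. apply sumR_le. intros q Hq.
  destruct (isp q) eqn:E; [|lra]. pose proof (isp_ge2 q E) as H2.
  pose proof (ln_nonneg_nat q ltac:(lia)) as Hl.
  assert (Hin : 0 <= sumR (fun k => Fnu (n / Nat.pow q (S k))) n)
    by (apply sumR_nonneg; intros; apply Fnu_bounds).
  destruct (Nat.leb q (n / 6)) eqn:E6. apply Rmult_le_pos; auto.
  apply Nat.leb_gt in E6.
  assert (Hf : Fnu (n / Nat.pow q 1) = 1).
  { apply Fnu_1. rewrite Nat.pow_1_r. split.
    apply Nat.div_str_pos. lia.
    assert (n / q < 6)%nat. apply Nat.Div0.div_lt_upper_bound.
    assert (n < 6 * (n / 6 + 1))%nat. { pose proof (Nat.div_mod_eq n 6). pose proof (Nat.mod_upper_bound n 6). lia. }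
    nia. lia. }
  assert (1 <= sumR (fun k => Fnu (n / Nat.pow q (S k))) n).
  { rewrite <- Hf. apply (sumR_ge_term (fun k => Fnu (n / Nat.pow q (S k))) n 0).
    intros; apply Fnu_bounds. lia. }
  nra.
Qed.

Lemma Glemma q n : (2 <= q)%nat -> (1 <= n)%nat -> forall K,
  sumR (fun k => if Nat.leb (Nat.pow q (S k)) n then ln (INR q) else 0) K <= ln (INR n) /\
  ((Nat.pow q K <= n)%nat -> sumR (fun k => if Nat.leb (Nat.pow q (S k)) n then ln (INR q) else 0) K = INR K * ln (INR q)).
Proof.
  intros Hq Hn. set (f := fun k => if Nat.leb (Nat.pow q (S k)) n then ln (INR q) else 0). induction K.
  - simpl. split. apply ln_nonneg_nat; auto. intros; ring.
  - destruct IHK as [IH1 IH2]. change (sumR f (S K)) with (sumR f K + f K). replace (f K) with (if Nat.leb (Nat.pow q (S K)) n then ln (INR q) else 0) by reflexivity.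
    destruct (Nat.leb (Nat.pow q (S K)) n) eqn:E.
    + apply Nat.leb_le in E.
      assert (Hk : (Nat.pow q K <= n)%nat).
      { apply Nat.le_trans with (Nat.pow q (S K)); auto. rewrite Nat.pow_succ_r'. nia. }
      rewrite (IH2 Hk). rewrite S_INR.
      assert (E2 : (INR K + 1) * ln (INR q) = ln (INR (Nat.pow q (S K)))).
      { rewrite pow_INR, ln_pow. rewrite S_INR. ring. apply lt_0_INR. lia. }
      split. replace (INR K * ln (INR q) + ln (INR q)) with ((INR K + 1) * ln (INR q)) by ring.
      rewrite E2. apply ln_le. apply lt_0_INR. apply Nat.neq_0_lt_0. apply Nat.pow_nonzero. lia.
      apply le_INR; auto. intros; ring.
    + apply Nat.leb_gt in E. split. lra. intros. lia.
Qed.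

Lemma count_le s m : sumR (fun q => if Nat.leb q s then 1 else 0) m = INR (Nat.min m (S s)).
Proof. induction m. simpl. auto. simpl sumR. rewrite IHm. destruct (Nat.leb m s) eqn:E.
  apply Nat.leb_le in E. rewrite !Nat.min_l by lia. rewrite S_INR; ring.
  apply Nat.leb_gt in E. rewrite !Nat.min_r by lia. ring. Qed.

Lemma Scheb_le_theta n : (1 <= n)%nat -> Scheb n <= theta n + ln (INR n) * (INR (Nat.sqrt n) + 1).
Proof.
  intros Hn. rewrite Scheb_leg. unfold theta.
  apply Rle_trans with (sumR (fun q => (if isp q then ln (INR q) else 0) + ln (INR n) * (if Nat.leb q (Nat.sqrt n) then 1 else 0)) (S n)).
  - apply sumR_le. intros q Hq. destruct (isp q) eqn:E.
    2: { pose proof (ln_nonneg_nat n Hn). destruct (Nat.leb _ _); lra. }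
    pose proof (isp_ge2 q E) as H2. pose proof (ln_nonneg_nat q ltac:(lia)) as Hl.
    pose proof (ln_nonneg_nat n Hn) as Hln.
    destruct (Nat.leb q (Nat.sqrt n)) eqn:Es.
    + apply Nat.leb_le in Es. apply Nat.sqrt_le_square in Es.
      apply Rle_trans with (ln (INR n)); [|lra].
      apply Rle_trans with (sumR (fun k => if Nat.leb (Nat.pow q (S k)) n then ln (INR q) else 0) n).
      * rewrite <- sumR_scal. apply sumR_le. intros k Hk.
        pose proof (Fnu_le_ind n (Nat.pow q (S k)) ltac:(apply Nat.pow_nonzero; lia)).
        pose proof (Fnu_bounds (n / Nat.pow q (S k))).
        destruct (Nat.leb _ _); nra.
      * apply Glemma; auto.
    + apply Nat.leb_gt in Es.
      assert (Hqq : (n < q * q)%nat).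
      { destruct (le_lt_dec (q * q) n) as [h|h]; auto. apply Nat.sqrt_le_square in h. lia. }
      rewrite Rmult_0_r, Rplus_0_r.
      assert (sumR (fun k => Fnu (n / Nat.pow q (S k))) n <= 1).
      { apply Rle_trans with (sumR (fun k => if Nat.eqb k 0 then 1 else 0) n).
        - apply sumR_le. intros k Hk. destruct (Nat.eqb k 0) eqn:Ek. apply Fnu_bounds.
          apply Nat.eqb_neq in Ek. rewrite Nat.div_small. rewrite Fnu_0; lra.
          apply Nat.lt_le_trans with (q * q)%nat; auto.
          destruct k. lia. simpl. rewrite Nat.mul_assoc. replace (q * q)%nat with (q * q * 1)%nat at 1 by lia.
          apply Nat.mul_le_mono_l. apply Nat.neq_0_lt_0. apply Nat.pow_nonzero. lia.
        - destruct n. lia. rewrite (sumR_split _ 1 (S n)) by lia. simpl.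
          rewrite sumR_zero. lra. }
      nra.
  - rewrite sumR_plus, sumR_scal, count_le. apply Rplus_le_compat_l.
    apply Rmult_le_compat_l. apply ln_nonneg_nat; auto.
    rewrite Nat.min_r. rewrite S_INR. lra.
    assert (Nat.sqrt n <= n)%nat by apply Nat.sqrt_le_lin. lia.
Qed.

Definition gS (t : R) : R := t * ln t - t.

Lemma lnfact_bounds m : (1 <= m)%nat ->
  gS (INR m) + 1 <= lnfact m <= gS (INR m) + 1 + ln (INR m).
Proof.
  intros Hm. induction Hm.
  - unfold lnfact, gS. simpl sumR. replace (INR 1) with 1 by reflexivity. rewrite ln_1. lra.
  - unfold lnfact in *. change (sumR (fun m0 => ln (INR (S m0))) (S m)) with
      (sumR (fun m0 => ln (INR (S m0))) m + ln (INR (S m))).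
    unfold gS in *. rewrite S_INR in *. assert (Hm0 : 1 <= INR m) by (apply (le_INR 1); auto).
    assert (Hl1 : ln ((INR m + 1) / INR m) <= (INR m + 1) / INR m - 1) by (apply ln_le_xm1; apply Rdiv_lt_0_compat; lra).
    assert (Hl2 : ln (INR m / (INR m + 1)) <= INR m / (INR m + 1) - 1) by (apply ln_le_xm1; apply Rdiv_lt_0_compat; lra).
    unfold Rdiv in Hl1, Hl2. rewrite ln_mult, ln_Rinv in Hl1, Hl2 by (try apply Rinv_0_lt_compat; lra).
    assert (E1 : (INR m + 1) * / INR m - 1 = / INR m) by (field; lra).
    assert (E2 : INR m * / (INR m + 1) - 1 = - / (INR m + 1)) by (field; lra).
    rewrite E1 in Hl1. rewrite E2 in Hl2.
    assert (H1 : INR m * (ln (INR m + 1) - ln (INR m)) <= 1).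
    { apply Rmult_le_compat_l with (r := INR m) in Hl1; [|lra].
      replace (INR m * / INR m) with 1 in Hl1 by (field; lra). lra. }
    assert (H2 : 1 <= (INR m + 1) * (ln (INR m + 1) - ln (INR m))).
    { apply Rmult_le_compat_l with (r := INR m + 1) in Hl2; [|lra].
      replace ((INR m + 1) * - / (INR m + 1)) with (-1) in Hl2 by (field; lra). lra. }
    split; nra.
Qed.

Lemma ln_div' x y : 0 < x -> 0 < y -> ln (x / y) = ln x - ln y.
Proof. intros. unfold Rdiv. rewrite ln_mult, ln_Rinv; try apply Rinv_0_lt_compat; auto. Qed.

Lemma g_floor (m : nat) (y : R) : (1 <= m)%nat -> INR m <= y < INR m + 1 ->
  gS (INR m) <= gS y /\ gS y - ln y <= gS (INR m).
Proof.
  intros Hm [Hy1 Hy2]. assert (H1 : 1 <= INR m) by (apply (le_INR 1); auto).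
  unfold gS.
  assert (La : ln (y / INR m) <= y / INR m - 1) by (apply ln_le_xm1; apply Rdiv_lt_0_compat; lra).
  assert (Lb : ln (INR m / y) <= INR m / y - 1) by (apply ln_le_xm1; apply Rdiv_lt_0_compat; lra).
  rewrite ln_div' in La, Lb by lra.
  assert (Ha : INR m * (ln y - ln (INR m)) <= y - INR m).
  { apply Rmult_le_compat_l with (r := INR m) in La; [|lra].
    replace (INR m * (y / INR m - 1)) with (y - INR m) in La by (field; lra). lra. }
  assert (Hb : y * (ln (INR m) - ln y) <= INR m - y).
  { apply Rmult_le_compat_l with (r := y) in Lb; [|lra].
    replace (y * (INR m / y - 1)) with (INR m - y) in Lb by (field; lra). lra. }
  assert (Hlm : 0 <= ln (INR m)) by (apply ln_pos_1; lra).
  assert (Hly : ln (INR m) <= ln y) by (apply ln_le; lra).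
  split; nra.
Qed.

Definition Acheb : R := ln 2 / 2 + ln 3 / 3 + ln 5 / 5 - ln 30 / 30.

Lemma g_comb x : 0 < x ->
  gS x - gS (x / 2) - gS (x / 3) - gS (x / 5) + gS (x / 30) = Acheb * x.
Proof. intros Hx. unfold gS, Acheb. rewrite !ln_div' by lra. field. Qed.

Lemma floor_div_bounds n j : (0 < j)%nat -> INR (n / j) <= INR n / INR j < INR (n / j) + 1.
Proof. intros Hj. pose proof (Nat.div_mod_eq n j). pose proof (Nat.mod_upper_bound n j ltac:(lia)).
  assert (Hj' : 0 < INR j) by (apply lt_0_INR; lia).
  assert (E : INR n = INR j * INR (n / j) + INR (n mod j)) by (rewrite H at 1; rewrite plus_INR, mult_INR; auto).
  assert (Hm : INR (n mod j) < INR j) by (apply lt_INR; auto).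
  pose proof (pos_INR (n mod j)).
  assert (E' : INR n / INR j = INR (n / j) + INR (n mod j) / INR j) by (rewrite E; field; lra).
  rewrite E'. set (u := INR (n mod j) / INR j).
  assert (Eu : INR (n mod j) = u * INR j) by (unfold u; field; lra).
  split; nra.
Qed.

Lemma part_bounds n j : (30 <= n)%nat -> (0 < j <= 30)%nat ->
  gS (INR n / INR j) - ln (INR n) + 1 <= lnfact (n / j) <= gS (INR n / INR j) + 1 + ln (INR n)
  /\ 0 < INR n / INR j /\ ln (INR n / INR j) <= ln (INR n).
Proof.
  intros Hn Hj. assert (Hm : (1 <= n / j)%nat).
  { apply Nat.div_le_lower_bound. lia. lia. }
  pose proof (floor_div_bounds n j ltac:(lia)) as Hfl.
  pose proof (g_floor (n / j) (INR n / INR j) Hm Hfl) as [G1 G2].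
  pose proof (lnfact_bounds (n / j) Hm) as [L1 L2].
  assert (Hpos : 0 < INR (n / j)) by (apply lt_0_INR; lia).
  assert (Hy : INR n / INR j <= INR n).
  { assert (1 <= INR j) by (apply (le_INR 1); lia). pose proof (pos_INR n).
    unfold Rdiv. rewrite <- (Rmult_1_r (INR n)) at 2. apply Rmult_le_compat_l; auto.
    rewrite <- Rinv_1. apply Rinv_le_contravar; lra. }
  assert (Hl1 : ln (INR n / INR j) <= ln (INR n)) by (apply ln_le; lra).
  assert (Hl2 : ln (INR (n / j)) <= ln (INR n)) by (apply ln_le; lra).
  split. split; lra. split; lra.
Qed.

Lemma Scheb_bounds n : (30 <= n)%nat ->
  Acheb * INR n - 4 * ln (INR n) - 1 <= Scheb n <= Acheb * INR n + 5 * ln (INR n).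
Proof.
  intros Hn. assert (Hn1 : (1 <= n)%nat) by lia.
  pose proof (lnfact_bounds n Hn1) as [L1 L2].
  pose proof (part_bounds n 2 Hn ltac:(lia)) as [[A1 A2] [_ _]].
  pose proof (part_bounds n 3 Hn ltac:(lia)) as [[B1 B2] [_ _]].
  pose proof (part_bounds n 5 Hn ltac:(lia)) as [[C1 C2] [_ _]].
  pose proof (part_bounds n 30 Hn ltac:(lia)) as [[D1 D2] [_ _]].
  assert (Hpos : 0 < INR n) by (apply lt_0_INR; lia).
  pose proof (g_comb (INR n) Hpos) as G.
  replace (INR 2) with 2 in * by (simpl; ring). replace (INR 3) with 3 in * by (simpl; ring).
  replace (INR 5) with 5 in * by (simpl; ring). replace (INR 30) with 30 in * by (simpl; ring).
  unfold Scheb. split; lra.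
Qed.

Lemma ln_ge1 x : 3 <= x -> 1 <= ln x.
Proof. intros. rewrite <- (ln_exp 1). apply ln_le. apply exp_pos. pose proof exp_le_3. lra. Qed.

Lemma Acheb_bounds : 23 / 30 <= Acheb <= 2.
Proof.
  assert (L2 : 0 < ln 2) by (rewrite <- ln_1; apply ln_increasing; lra).
  assert (L3 : 1 <= ln 3) by (apply ln_ge1; lra).
  assert (L5 : 1 <= ln 5) by (apply ln_ge1; lra).
  assert (E30 : ln 30 = ln 2 + ln 3 + ln 5).
  { replace 30 with (2 * 3 * 5) by ring. rewrite !ln_mult by lra. ring. }
  assert (Hk : 14 * ln 3 <= 14 * ln 2 + 5 * ln 5).
  { replace (14 * ln 2) with (ln (2 ^ 14)) by (rewrite ln_pow; [simpl; ring | lra]).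
    replace (5 * ln 5) with (ln (5 ^ 5)) by (rewrite ln_pow; [simpl; ring | lra]).
    replace (14 * ln 3) with (ln (3 ^ 14)) by (rewrite ln_pow; [simpl; ring | lra]).
    rewrite <- ln_mult by (apply pow_lt; lra).
    apply ln_le. apply pow_lt; lra. simpl. lra. }
  assert (U2 : ln 2 <= 1) by (pose proof (ln_le_xm1 2); lra).
  assert (U3 : ln 3 <= 2) by (pose proof (ln_le_xm1 3); lra).
  assert (U5 : ln 5 <= 4) by (pose proof (ln_le_xm1 5); lra).
  unfold Acheb. rewrite E30. split; lra.
Qed.

Lemma theta_nonneg n : 0 <= theta n.
Proof. unfold theta. apply sumR_nonneg. intros q _. destruct (isp q) eqn:E; [|lra].
  apply ln_nonneg_nat. pose proof (isp_ge2 q E). lia. Qed.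

Lemma theta_small n : (n < 30)%nat -> theta n <= 900.
Proof. intros Hn. unfold theta. apply Rle_trans with (sumR (fun _ => 29) (S n)).
  apply sumR_le. intros q Hq. destruct (isp q) eqn:E; [|lra].
  pose proof (isp_ge2 q E). pose proof (ln_le_xm1 (INR q) ltac:(apply lt_0_INR; lia)).
  assert (INR q <= 29) by (replace 29 with (INR 29) by (simpl; ring); apply le_INR; lia). lra.
  rewrite sumR_const. assert (INR (S n) <= 30) by (replace 30 with (INR 30) by (simpl; ring); apply le_INR; lia).
  lra. Qed.

Lemma theta_upper n : (1 <= n)%nat ->
  theta n <= 6 / 5 * Acheb * INR n + 5 * (ln (INR n) + 1) ^ 2 + 900.
Proof.
  induction n as [n IH] using (well_founded_induction lt_wf). intros Hn.
  pose proof Acheb_bounds as [HA1 HA2].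
  assert (Hln : 0 <= ln (INR n)) by (apply ln_nonneg_nat; auto).
  assert (Hnn : 0 <= INR n) by apply pos_INR.
  destruct (lt_dec n 30) as [Hs|Hb].
  - pose proof (theta_small n Hs). assert (0 <= 6/5 * Acheb * INR n) by (apply Rmult_le_pos; lra).
    nra.
  - assert (H30 : (30 <= n)%nat) by lia.
    pose proof (theta_le_Scheb n) as T1. pose proof (Scheb_bounds n H30) as [_ T2].
    assert (Hm : (1 <= n / 6)%nat) by (apply Nat.div_le_lower_bound; lia).
    assert (Hlt : (n / 6 < n)%nat) by (apply Nat.div_lt; lia).
    pose proof (IH (n / 6)%nat Hlt Hm) as T3.
    pose proof (floor_div_bounds n 6 ltac:(lia)) as [F1 _].
    replace (INR 6) with 6 in F1 by (simpl; ring).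
    assert (Hm0 : 0 < INR (n / 6)) by (apply lt_0_INR; lia).
    assert (Lm : ln (INR (n / 6)) <= ln (INR n) - 1).
    { apply Rle_trans with (ln (INR n / 6)). apply ln_le; lra.
      rewrite ln_div' by lra. pose proof (ln_ge1 6 ltac:(lra)). lra. }
    assert (Lm0 : 0 <= ln (INR (n / 6))) by (apply ln_nonneg_nat; auto).
    assert (Sq : (ln (INR (n / 6)) + 1) ^ 2 <= ln (INR n) ^ 2).
    { apply pow_incr. lra. }
    assert (Am : 6 / 5 * Acheb * INR (n / 6) <= 6 / 5 * Acheb * (INR n / 6)).
    { apply Rmult_le_compat_l. nra. lra. }
    simpl in Sq |- *. nra.
Qed.

Lemma theta_lower n : (30 <= n)%nat ->
  Acheb * INR n - 4 * ln (INR n) - 1 - ln (INR n) * (sqrt (INR n) + 1) <= theta n.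
Proof.
  intros Hn. pose proof (Scheb_le_theta n ltac:(lia)). pose proof (Scheb_bounds n Hn) as [T _].
  assert (INR (Nat.sqrt n) <= sqrt (INR n)).
  { rewrite <- (sqrt_square (INR (Nat.sqrt n))) by apply pos_INR. apply sqrt_le_1_alt.
    rewrite <- mult_INR. apply le_INR. apply Nat.sqrt_le_square. lia. }
  assert (0 <= ln (INR n)) by (apply ln_nonneg_nat; lia).
  assert (ln (INR n) * (INR (Nat.sqrt n) + 1) <= ln (INR n) * (sqrt (INR n) + 1))
    by (apply Rmult_le_compat_l; lra).
  lra.
Qed.

Lemma nat_large x : exists n0 : nat, forall n, (n0 <= n)%nat -> x <= INR n.
Proof.
  destruct (archimed x) as [H1 _]. exists (Z.to_nat (up x)). intros n Hn.
  apply le_INR in Hn. destruct (Z_lt_le_dec (up x) 0).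
  - replace (Z.to_nat (up x)) with 0%nat in Hn by lia. pose proof (IZR_lt _ _ l). pose proof (pos_INR n). lra.
  - rewrite INR_IZR_INZ, Z2Nat.id in Hn by lia. lra.
Qed.

Lemma small_o eps : 0 < eps -> exists n0 : nat, forall n, (n0 <= n)%nat ->
  ln (INR n) * (sqrt (INR n) + 5) + 1 <= eps * INR n /\
  5 * (ln (INR n) + 1) ^ 2 + 900 <= eps * INR n.
Proof.
  intros He. set (T := 1 + 1025 / eps).
  assert (HT : 1 <= T /\ 1025 / eps <= T) by (unfold T; split; [|lra]; assert (0 < 1025 / eps) by (apply Rdiv_lt_0_compat; lra); lra).
  destruct (nat_large (T ^ 4)) as [n0 Hn0]. exists (Nat.max n0 1). intros n Hn.
  assert (Hn1 : 1 <= INR n) by (apply (le_INR 1); lia).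
  specialize (Hn0 n ltac:(lia)).
  set (t := sqrt (sqrt (INR n))).
  assert (Hs : 0 <= sqrt (INR n)) by apply sqrt_pos.
  assert (Ht2 : t * t = sqrt (INR n)) by (apply sqrt_sqrt; auto).
  assert (Hs2 : sqrt (INR n) * sqrt (INR n) = INR n) by (apply sqrt_sqrt; lra).
  assert (Ht0 : 0 <= t) by apply sqrt_pos.
  assert (Htpos : 0 < t).
  { unfold t. apply sqrt_lt_R0. apply sqrt_lt_R0. lra. }
  assert (HtT : T <= t).
  { destruct (Rle_lt_dec T t) as [h|h]; auto. exfalso.
    assert (t * t * (t * t) < T * T * (T * T)).
    { assert (t * t < T * T) by nra. nra. }
    simpl in Hn0. nra. }
  assert (Hln : ln (INR n) = 4 * ln t).
  { replace (INR n) with (t ^ 4) by (simpl; nra). rewrite ln_pow by lra. simpl; ring. }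
  assert (Hlt : ln t <= t) by (pose proof (ln_le_xm1 t Htpos); lra).
  assert (Hl0 : 0 <= ln (INR n)) by (rewrite <- ln_1; apply ln_le; lra).
  assert (Heps1 : 1025 <= eps * t).
  { assert (1025 <= eps * T). { unfold T. field_simplify; [|lra]. lra. }
    assert (eps * T <= eps * t) by (apply Rmult_le_compat_l; lra). lra. }
  split.
  - assert (ln (INR n) * (sqrt (INR n) + 5) <= 4 * t * (t * t + 5)).
    { rewrite Hln, <- Ht2. apply Rmult_le_compat; nra. }
    assert (4 * t * (t * t + 5) + 1 <= 25 * (t * t * t)) by nra.
    assert (25 * (t * t * t) <= eps * t * (t * t * t)) by (apply Rmult_le_compat_r; nra).
    replace (INR n) with (t * t * (t * t)) at 3 by nra. nra.
  - assert ((ln (INR n) + 1) ^ 2 <= (4 * t + 1) ^ 2) by (apply pow_incr; lra).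
    assert (1025 <= eps * t * t).
    { assert (eps * t * 1 <= eps * t * t) by (apply Rmult_le_compat_l; nra). lra. }
    replace (INR n) with (t * t * (t * t)) at 3 by nra.
    assert (5 * (4 * t + 1) ^ 2 + 900 <= 1025 * (t * t)) by (simpl; nra).
    assert (1025 * (t * t) <= eps * t * t * (t * t)) by (apply Rmult_le_compat_r; nra).
    nra.
Qed.

Lemma theta_asym eps : 0 < eps -> exists n0 : nat, forall n, (n0 <= n)%nat ->
  (Acheb - eps) * INR n <= theta n <= (6 / 5 * Acheb + eps) * INR n.
Proof.
  intros He. destruct (small_o eps He) as [n0 H]. exists (Nat.max n0 30). intros n Hn.
  destruct (H n ltac:(lia)) as [H1 H2].
  pose proof (theta_lower n ltac:(lia)). pose proof (theta_upper n ltac:(lia)).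
  split; nra.
Qed.

Lemma abel (u w : nat -> R) d : u 0%nat = 0 ->
  sumR (fun n => (u (S n) - u n) * w (S n)) d = u d * w d + sumR (fun n => u n * (w n - w (S n))) d.
Proof. intros H0. induction d. simpl. rewrite H0. ring. simpl sumR. rewrite IHd. ring. Qed.

Definition wq (n : nat) : R := / (INR n * INR n).

Lemma sumR_ind_zero (P : nat -> bool) f B : (forall n, (n < B)%nat -> P n = false) ->
  sumR (fun n => if P n then f n else 0) B = 0.
Proof. intros H. transitivity (sumR (fun _ => 0) B); [apply sumR_ext; intros i Hi; rewrite H; auto | apply sumR_zero]. Qed.

Lemma tele1 y0 B : (1 <= y0 <= B)%nat ->
  sumR (fun n => if Nat.leb y0 n then wq n - wq (S n) else 0) B = wq y0 - wq B.
Proof. intros [H1 H2]. induction H2.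
  - rewrite sumR_ind_zero. ring. intros n Hn. apply Nat.leb_gt; lia.
  - simpl sumR. rewrite IHle. replace (Nat.leb y0 m) with true by (symmetry; apply Nat.leb_le; lia). ring.
Qed.

Lemma tele2_step (B : nat) : (1 <= B)%nat -> 2 * (/ (INR B + 1) - / (INR B + 2)) <= INR B * (wq B - wq (S B)).
Proof. intros HB. unfold wq. rewrite S_INR. assert (Ht : 1 <= INR B) by (apply (le_INR 1); auto).
  set (t := INR B) in *.
  assert (E : t * (/ (t * t) - / ((t + 1) * (t + 1))) - 2 * (/ (t + 1) - / (t + 2)) = (3 * t + 2) / (t * ((t + 1) * (t + 1)) * (t + 2))) by (field; lra).
  assert (0 <= (3 * t + 2) / (t * ((t + 1) * (t + 1)) * (t + 2))).
  { apply Rle_mult_inv_pos. lra. apply Rmult_lt_0_compat; [|lra]. apply Rmult_lt_0_compat; nra. }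
  lra. Qed.

Lemma tele2 y0 B : (1 <= y0 <= B)%nat ->
  2 * (/ (INR y0 + 1) - / (INR B + 1)) <= sumR (fun n => if Nat.leb y0 n then INR n * (wq n - wq (S n)) else 0) B.
Proof. intros [H1 H2]. induction H2.
  - rewrite sumR_ind_zero. lra. intros n Hn. apply Nat.leb_gt; lia.
  - simpl sumR. replace (Nat.leb y0 m) with true by (symmetry; apply Nat.leb_le; lia).
    pose proof (tele2_step m ltac:(lia)). rewrite S_INR.
    replace (INR m + 1 + 1) with (INR m + 2) by ring. lra.
Qed.

Lemma theta_S n : theta (S n) = theta n + (if isp (S n) then ln (INR (S n)) else 0).
Proof. reflexivity. Qed.

Lemma theta_mono n m : (n <= m)%nat -> theta n <= theta m.
Proof. intros H. induction H. lra. rewrite theta_S. destruct (isp (S m)) eqn:E; [|lra].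
  pose proof (ln_nonneg_nat (S m) ltac:(lia)). lra. Qed.

(* weighted prime sum over primes in (a, B] *)
Definition PS (a B : nat) : R :=
  sumR (fun n => if Nat.ltb a (S n) then (if isp (S n) then ln (INR (S n)) else 0) * wq (S n) else 0) B.

Lemma PS_lower (a B y0 : nat) (al be : R) :
  (1 <= y0 <= B)%nat -> (a <= y0)%nat -> 0 <= al -> 0 <= be ->
  (forall n, (y0 <= n)%nat -> al * INR n - be <= theta n - theta a) ->
  al * INR y0 - be >= 0 ->
  2 * al * (/ (INR y0 + 1) - / (INR B + 1)) - be * wq y0 <= PS a B.
Proof.
  intros HyB Ha Hal Hbe0' Hth Hbe.
  set (u := fun n => theta (Nat.max n a) - theta a).
  assert (Hu0 : u 0%nat = 0) by (unfold u; rewrite Nat.max_r by lia; ring).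
  assert (E : PS a B = sumR (fun n => (u (S n) - u n) * wq (S n)) B).
  { unfold PS. apply sumR_ext. intros n Hn. unfold u.
    destruct (Nat.ltb a (S n)) eqn:E0.
    - apply Nat.ltb_lt in E0. rewrite (Nat.max_l (S n)) by lia.
      destruct (Nat.eq_dec n a). subst. rewrite Nat.max_r by lia. rewrite theta_S. ring.
      rewrite Nat.max_l by lia. rewrite theta_S. ring.
    - apply Nat.ltb_ge in E0. rewrite !Nat.max_r by lia. ring. }
  rewrite E, abel by auto.
  assert (Hun : forall n, 0 <= u n) by (intros; unfold u; pose proof (theta_mono a (Nat.max n a) ltac:(lia)); lra).
  assert (Hw : forall n, (1 <= n)%nat -> 0 <= wq n - wq (S n)).
  { intros n Hn. unfold wq. rewrite S_INR. assert (1 <= INR n) by (apply (le_INR 1); auto).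
    assert (INR n * INR n <= (INR n + 1) * (INR n + 1)) by nra.
    assert (/ ((INR n + 1) * (INR n + 1)) <= / (INR n * INR n)) by (apply Rinv_le_contravar; nra). lra. }
  assert (HwB : 0 <= u B * wq B) by (apply Rmult_le_pos; auto; unfold wq; left; apply Rinv_0_lt_compat; apply Rmult_lt_0_compat; apply lt_0_INR; lia).
  assert (Hmain : sumR (fun n => if Nat.leb y0 n then (al * INR n - be) * (wq n - wq (S n)) else 0) B
                  <= sumR (fun n => u n * (wq n - wq (S n))) B).
  { apply sumR_le. intros n Hn. destruct (Nat.leb y0 n) eqn:E1.
    - apply Nat.leb_le in E1. apply Rmult_le_compat_r. apply Hw; lia.
      unfold u. rewrite Nat.max_l by lia. apply Hth; auto.
    - destruct n. rewrite Hu0. lra. apply Rmult_le_pos; auto. apply Hw; lia. }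
  assert (Hsplit : sumR (fun n => if Nat.leb y0 n then (al * INR n - be) * (wq n - wq (S n)) else 0) B =
     al * sumR (fun n => if Nat.leb y0 n then INR n * (wq n - wq (S n)) else 0) B
     - be * sumR (fun n => if Nat.leb y0 n then wq n - wq (S n) else 0) B).
  { unfold Rminus. rewrite <- sumR_scal, Ropp_mult_distr_l, <- sumR_scal, <- sumR_plus. apply sumR_ext.
    intros. destruct (Nat.leb y0 i); ring. }
  rewrite tele1 in Hsplit by auto. pose proof (tele2 y0 B HyB).
  assert (0 <= wq B) by (unfold wq; destruct B; [lia|]; left; apply Rinv_0_lt_compat; apply Rmult_lt_0_compat; apply lt_0_INR; lia).
  assert (0 <= be * wq B) by (apply Rmult_le_pos; auto).
  assert (al * (2 * (/ (INR y0 + 1) - / (INR B + 1))) <= al * sumR (fun n => if Nat.leb y0 n then INR n * (wq n - wq (S n)) else 0) B) by (apply Rmult_le_compat_l; auto).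
  lra.
Qed.

Lemma floor_nat x : 0 <= x -> exists a : nat, INR a <= x < INR a + 1.
Proof.
  intros Hx. destruct (archimed x) as [H1 H2].
  exists (Z.to_nat (up x - 1)).
  assert (Hup : (0 <= up x - 1)%Z).
  { assert (IZR 0 < IZR (up x)) by lra. apply lt_IZR in H. lia. }
  rewrite INR_IZR_INZ, Z2Nat.id by auto. rewrite minus_IZR. simpl. lra.
Qed.

Lemma PS_to_sum (a B : nat) (x : R) : INR a <= x < INR a + 1 -> (1 <= B)%nat ->
  PS a B <= ln (INR B) *
    sumR (fun n => if Rle_dec x (INR (S n)) then (if isp (S n) then wq (S n) else 0) else 0) B.
Proof.
  intros [Ha1 Ha2] HB. unfold PS. rewrite <- sumR_scal. apply sumR_le. intros n Hn.
  assert (Hw : 0 <= wq (S n)) by (unfold wq; left; apply Rinv_0_lt_compat; apply Rmult_lt_0_compat; apply lt_0_INR; lia).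
  assert (HlB : 0 <= ln (INR B)) by (apply ln_nonneg_nat; lia).
  destruct (Nat.ltb a (S n)) eqn:E.
  - apply Nat.ltb_lt in E. assert (Hx : x <= INR (S n)).
    { assert (INR a + 1 <= INR (S n)) by (rewrite <- S_INR; apply le_INR; lia). lra. }
    destruct (Rle_dec x (INR (S n))); [|contradiction].
    destruct (isp (S n)); [|lra].
    assert (ln (INR (S n)) <= ln (INR B)) by (apply ln_le; [apply lt_0_INR; lia | apply le_INR; lia]).
    apply Rmult_le_compat_r; auto.
  - destruct (Rle_dec x (INR (S n))); [|lra]. destruct (isp (S n)); [|lra].
    apply Rmult_le_pos; auto.
Qed.

Lemma NT_final : exists X0, 0 < X0 /\ forall x, X0 <= x -> exists B : nat,
  11 / 20 / (x * ln x) <=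
  sumR (fun n => if Rle_dec x (INR (S n)) then (if isp (S n) then wq (S n) else 0) else 0) B.
Proof.
  pose proof Acheb_bounds as [HA1 HA2]. set (A := Acheb) in *.
  assert (Heps : 0 < A / 100) by lra.
  destruct (theta_asym (A / 100) Heps) as [n0 Hn0]. change Acheb with A in Hn0.
  set (X0 := Rmax (INR n0 + 1) (1000 ^ 11)).
  assert (HX1 : INR n0 + 1 <= X0) by apply Rmax_l.
  assert (HX2 : 1000 ^ 11 <= X0) by apply Rmax_r.
  assert (H1000 : 500 <= 1000 ^ 11) by (simpl; lra).
  exists X0. split. lra. intros x Hx.
  assert (Hx0 : 500 <= x) by lra.
  destruct (floor_nat x ltac:(lra)) as [a [Ha1 Ha2]].
  set (c := 121 / 99).
  destruct (floor_nat (c * x) ltac:(unfold c; lra)) as [y1 [Hy1 Hy2]].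
  set (y0 := S y1).
  assert (Hy0 : c * x <= INR y0 <= c * x + 1) by (unfold y0; rewrite S_INR; lra).
  destruct (floor_nat (1000 * x) ltac:(lra)) as [B [HB1 HB2]].
  assert (Han0 : (n0 <= a)%nat).
  { destruct (le_lt_dec n0 a); auto. exfalso. assert (INR a + 1 <= INR n0) by (rewrite <- S_INR; apply le_INR; lia). lra. }
  assert (Hay0 : (a <= y0)%nat).
  { destruct (le_lt_dec a y0); auto. exfalso. assert (INR y0 < INR a) by (apply lt_INR; lia). unfold c in Hy0. lra. }
  assert (Hy0B : (y0 <= B)%nat).
  { destruct (le_lt_dec y0 B); auto. exfalso. assert (INR B + 1 <= INR y0) by (rewrite <- S_INR; apply le_INR; lia). unfold c in Hy0. lra. }
  set (al := 99 / 100 * A). set (be := 121 / 100 * A * x).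
  assert (Hth_a : theta a <= be).
  { destruct (Hn0 a Han0) as [_ T]. unfold be.
    assert (0 <= INR a) by apply pos_INR.
    assert ((6 / 5 * A + A / 100) * INR a <= (6 / 5 * A + A / 100) * x) by (apply Rmult_le_compat_l; lra).
    lra. }
  assert (Hth : forall n, (y0 <= n)%nat -> al * INR n - be <= theta n - theta a).
  { intros n Hn. destruct (Hn0 n ltac:(lia)) as [T _]. unfold al. lra. }
  assert (Hbe : al * INR y0 - be >= 0).
  { unfold al, be. unfold c in Hy0. assert (99 / 100 * A * (121 / 99 * x) <= 99 / 100 * A * INR y0) by (apply Rmult_le_compat_l; lra).
    lra. }
  assert (HPS := PS_lower a B y0 al be ltac:(unfold y0; lia) Hay0 ltac:(unfold al; lra) ltac:(unfold be; nra) Hth Hbe).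
  assert (HB1' : (1 <= B)%nat) by lia.
  pose proof (PS_to_sum a B x (conj Ha1 Ha2) HB1') as HS.
  exists B.
  assert (Hcx : 0 < c * x) by (unfold c; lra).
  assert (I1 : / (c * x + 2) <= / (INR y0 + 1)) by (apply Rinv_le_contravar; lra).
  assert (I2 : / (INR B + 1) <= / (1000 * x)) by (apply Rinv_le_contravar; lra).
  assert (I3 : wq y0 <= / ((c * x) * (c * x))).
  { unfold wq. apply Rinv_le_contravar. nra. apply Rmult_le_compat; lra. }
  assert (Hal0 : 0 <= al) by (unfold al; lra).
  assert (Hbe0 : 0 <= be) by (unfold be; nra).
  assert (R1 : 2 * al * (/ (c * x + 2) - / (1000 * x)) - be * / ((c * x) * (c * x)) <= PS a B).
  { assert (2 * al * / (c * x + 2) <= 2 * al * / (INR y0 + 1)) by (apply Rmult_le_compat_l; lra).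
    assert (2 * al * / (INR B + 1) <= 2 * al * / (1000 * x)) by (apply Rmult_le_compat_l; lra).
    assert (be * wq y0 <= be * / ((c * x) * (c * x))) by (apply Rmult_le_compat_l; lra).
    lra. }
  assert (R2 : 3 / 5 / x <= 2 * al * (/ (c * x + 2) - / (1000 * x)) - be * / ((c * x) * (c * x))).
  { unfold al, be, c.
    replace (2 * (99 / 100 * A) * (/ (121 / 99 * x + 2) - / (1000 * x)) -
      121 / 100 * A * x * / (121 / 99 * x * (121 / 99 * x)))
      with ((198 / 100 * A * (1000 * x) - 198 / 100 * A * (121 / 99 * x + 2)) / ((121 / 99 * x + 2) * (1000 * x) ) - 81 / 100 * A / x)
      by (field; lra).
    assert (K1 : 3 / 5 / x + 81 / 100 * A / x = (3 / 5 + 81 / 100 * A) / x) by (field; lra).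
    assert (K2 : (3 / 5 + 81 / 100 * A) / x <= (198 / 100 * A * (1000 * x) - 198 / 100 * A * (121 / 99 * x + 2)) / ((121 / 99 * x + 2) * (1000 * x))).
    { apply Rmult_le_reg_r with (x * ((121 / 99 * x + 2) * (1000 * x))). nra.
      unfold Rdiv. field_simplify; try lra. nra. }
    lra. }
  assert (HBpos : 0 < INR B) by (apply lt_0_INR; lia).
  assert (LB : ln (INR B) <= ln x + ln 1000).
  { rewrite <- ln_mult by lra. apply ln_le; lra. }
  assert (Lx : 11 * ln 1000 <= ln x).
  { replace (11 * ln 1000) with (ln (1000 ^ 11)) by (rewrite ln_pow; [simpl; ring|lra]). apply ln_le. apply pow_lt; lra. lra. }
  assert (L1000 : 0 < ln 1000) by (rewrite <- ln_1; apply ln_increasing; lra).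
  set (S := sumR _ B) in *.
  assert (HS' : 3 / 5 / x <= ln (INR B) * S) by lra.
  assert (S0 : 0 <= S).
  { unfold S. apply sumR_nonneg. intros n _. destruct (Rle_dec _ _); [|lra]. destruct (isp _); [|lra].
    unfold wq. left. apply Rinv_0_lt_compat. apply Rmult_lt_0_compat; apply lt_0_INR; lia. }
  assert (Hlx : 0 < ln x) by lra.
  assert (HS2 : 3 / 5 / x <= (ln x + ln 1000) * S).
  { assert (ln (INR B) * S <= (ln x + ln 1000) * S) by (apply Rmult_le_compat_r; lra). lra. }
  assert (HS3 : 3 / 5 <= x * (ln x + ln 1000) * S).
  { apply Rmult_le_compat_l with (r := x) in HS2; [|lra].
    replace (x * (3 / 5 / x)) with (3 / 5) in HS2 by (field; lra). lra. }
  apply Rmult_le_reg_r with (x * ln x). nra.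
  replace (11 / 20 / (x * ln x) * (x * ln x)) with (11 / 20) by (field; nra).
  assert (x * (ln x + ln 1000) * S <= x * (12 / 11 * ln x) * S).
  { apply Rmult_le_compat_r; auto. apply Rmult_le_compat_l; lra. }
  nra.
Qed.

Module IntPart.
Import Coquelicot.Coquelicot.

Lemma phi_bounds (delta : R) (N : nat) (v : R) : is_phi delta N v ->
  delta <= INR N ^ 2 / (4 * v * ln v) /\ INR N ^ 2 / (8 * v * ln (2 * v)) <= delta.
Proof.
  intros [Hv [pr Hpr]]. rewrite <- Hpr. rewrite <- (RInt_Reals _ _ _ pr).
  set (f := fun x => INR N ^ 2 / (2 * x ^ 2 * ln x)).
  assert (Hex : ex_RInt f v (2 * v)) by (apply ex_RInt_Reals_1; exact pr).
  assert (Hl : 0 < ln v) by (rewrite <- ln_1; apply ln_increasing; lra).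
  assert (HN : 0 <= INR N ^ 2) by (apply pow_le; apply pos_INR).
  split.
  - set (K := INR N ^ 2 / (2 * ln v)).
    set (F := fun x => - K / x).
    assert (HI : is_RInt (fun x => K / x ^ 2) v (2 * v) (minus (F (2 * v)) (F v))).
    { apply (@is_RInt_derive R_CompleteNormedModule F (fun x => K / x ^ 2)).
      - intros x Hx. rewrite Rmin_left in Hx by lra. rewrite Rmax_right in Hx by lra.
        unfold F. auto_derive. lra. field. lra.
      - intros x Hx. rewrite Rmin_left in Hx by lra. rewrite Rmax_right in Hx by lra.
        apply (@ex_derive_continuous R_AbsRing R_NormedModule). auto_derive. apply Rmult_integral_contrapositive_currified; [lra|]. rewrite Rmult_1_r; lra. }
    assert (Hle : RInt f v (2 * v) <= RInt (fun x => K / x ^ 2) v (2 * v)).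
    { apply RInt_le. lra. auto. exists (minus (F (2 * v)) (F v)). auto.
      intros x Hx. unfold f, K.
      assert (ln v <= ln x) by (left; apply ln_increasing; lra).
      assert (0 < x ^ 2) by (apply pow_lt; lra).
      apply Rle_trans with (INR N ^ 2 / (2 * x ^ 2 * ln v)).
      + unfold Rdiv. apply Rmult_le_compat_l; auto. apply Rinv_le_contravar.
        apply Rmult_lt_0_compat; lra. apply Rmult_le_compat_l; lra.
      + right. field. split; lra. }
    rewrite (is_RInt_unique _ _ _ _ HI) in Hle. unfold minus, plus, opp, F, K in Hle. simpl in Hle.
    apply Rle_trans with (1 := Hle). right. field. split; lra.
  - set (K := INR N ^ 2 / (8 * v ^ 2 * ln (2 * v))).
    assert (Hl2 : 0 < ln (2 * v)) by (rewrite <- ln_1; apply ln_increasing; lra).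
    assert (Hle : RInt (fun _ => K) v (2 * v) <= RInt f v (2 * v)).
    { apply RInt_le. lra. apply ex_RInt_const. auto.
      intros x Hx. unfold f, K.
      assert (ln x <= ln (2 * v)) by (left; apply ln_increasing; lra).
      assert (0 < ln x) by (rewrite <- ln_1; apply ln_increasing; lra).
      assert (x ^ 2 <= 4 * v ^ 2) by (simpl; nra).
      assert (0 < x ^ 2) by (apply pow_lt; lra).
      unfold Rdiv. apply Rmult_le_compat_l; auto. apply Rinv_le_contravar.
      apply Rmult_lt_0_compat; [lra|auto].
      replace (8 * v ^ 2 * ln (2 * v)) with (2 * (4 * v ^ 2) * ln (2 * v)) by ring.
      apply Rmult_le_compat; try nra. }
    rewrite RInt_const in Hle. unfold scal in Hle. simpl in Hle. unfold mult in Hle. simpl in Hle.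
    apply Rle_trans with (2 := Hle). unfold K. right. field. split; lra.
Qed.
End IntPart.

Lemma sumR_shift g d : sumR g (S d) = g 0%nat + sumR (fun i => g (S i)) d.
Proof. induction d. simpl. ring. change (sumR g (S (S d))) with (sumR g (S d) + g (S d)).
  rewrite IHd. simpl. ring. Qed.

Section Enum.
Variable p : nat -> nat.
Hypothesis Hinc : forall i, (p i < p (S i))%nat.
Hypothesis Hpr : forall n : nat, prime (Z.of_nat n) <-> exists i, p i = n.

Lemma p_mono i j : (i < j)%nat -> (p i < p j)%nat.
Proof. intros H. induction H. apply Hinc. specialize (Hinc m). lia. Qed.

Lemma p_mono_inv i j : (p i < p j)%nat -> (i < j)%nat.
Proof. intros H. destruct (lt_eq_lt_dec i j) as [[h|h]|h]; auto. subst; lia.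
  apply p_mono in h. lia. Qed.

Lemma p_isp i : isp (p i) = true.
Proof. apply prime_bridge. apply Hpr. eauto. Qed.

Lemma p_ge2 i : (2 <= p i)%nat.
Proof. apply isp_ge2. apply p_isp. Qed.

Lemma p_ge_id i : (i <= p i)%nat.
Proof. induction i. lia. specialize (Hinc i). lia. Qed.

Lemma isp_enum n : isp n = true -> exists i, p i = n.
Proof. intros H. apply Hpr. apply prime_bridge. auto. Qed.

Lemma enum_sum (F : nat -> R) M :
  sumR (fun n => if isp n then F n else 0) (p M) = sumR (fun i => F (p i)) M.
Proof.
  induction M.
  - simpl. transitivity (sumR (fun _ => 0) (p 0%nat)); [|apply sumR_zero].
    apply sumR_ext. intros n Hn. destruct (isp n) eqn:E; auto.
    destruct (isp_enum n E) as [j <-]. destruct j. lia. pose proof (p_mono 0 (S j) ltac:(lia)). lia.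
  - rewrite (sumR_split _ (p M) (p (S M))) by (specialize (Hinc M); lia).
    rewrite IHM. simpl (sumR (fun i => F (p i)) (S M)). f_equal.
    assert (Hd : (p (S M) - p M = S (p (S M) - p M - 1))%nat) by (specialize (Hinc M); lia).
    rewrite Hd, sumR_shift. rewrite Nat.add_0_r, p_isp.
    rewrite (sumR_ext _ (fun _ => 0)). rewrite sumR_zero. ring.
    intros i Hi. destruct (isp (p M + S i)%nat) eqn:E; auto.
    destruct (isp_enum _ E) as [j Hj].
    assert (M < j)%nat by (apply p_mono_inv; lia).
    assert (j < S M)%nat by (apply p_mono_inv; lia). lia.
Qed.
End Enum.

Lemma ln_le_2sqrt y : 0 < y -> ln y <= 2 * sqrt y.
Proof. intros Hy. assert (Hs : 0 < sqrt y) by (apply sqrt_lt_R0; auto).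
  replace (ln y) with (2 * ln (sqrt y)).
  pose proof (ln_le_xm1 (sqrt y) Hs). lra.
  rewrite <- (sqrt_sqrt y) at 2 by lra. rewrite ln_mult by auto. ring. Qed.

Lemma phi_large delta T : 0 < delta -> 1 <= T -> exists N0 : nat, (1 <= N0)%nat /\
  forall N v, (N0 <= N)%nat -> is_phi delta N v -> T * INR N <= v.
Proof.
  intros Hd HT. destruct (nat_large (512 * T ^ 3 * delta ^ 2 + 1)) as [n0 Hn0].
  exists (Nat.max n0 1). split. lia. intros N v HN Hphi.
  specialize (Hn0 N ltac:(lia)). assert (HN1 : 1 <= INR N) by (apply (le_INR 1); lia).
  destruct (Rle_dec (T * INR N) v) as [h|h]; auto. exfalso. apply Rnot_le_lt in h.
  pose proof (IntPart.phi_bounds delta N v Hphi) as [_ Hlow].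
  destruct Hphi as [Hv _].
  assert (Hl2v : 0 < ln (2 * v)) by (rewrite <- ln_1; apply ln_increasing; lra).
  assert (E1 : INR N ^ 2 <= delta * (8 * v * ln (2 * v))).
  { apply Rmult_le_compat_r with (r := 8 * v * ln (2 * v)) in Hlow; [|nra].
    replace (INR N ^ 2 / (8 * v * ln (2 * v)) * (8 * v * ln (2 * v))) with (INR N ^ 2) in Hlow by (field; split; lra).
    lra. }
  set (s := sqrt (2 * T * INR N)).
  assert (Hs0 : 0 < s) by (apply sqrt_lt_R0; nra).
  assert (Hs2 : s * s = 2 * T * INR N) by (apply sqrt_sqrt; nra).
  assert (E2 : ln (2 * v) <= 2 * s).
  { apply Rle_trans with (ln (2 * T * INR N)). apply ln_le; lra. apply ln_le_2sqrt. nra. }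
  assert (E3 : v * ln (2 * v) <= T * INR N * (2 * s)) by (apply Rmult_le_compat; lra).
  assert (E4 : INR N ^ 2 <= 16 * delta * T * INR N * s) by nra.
  assert (E5 : INR N <= 16 * delta * T * s) by (simpl in E4; nra).
  assert (E6 : INR N * INR N <= 256 * delta ^ 2 * T ^ 2 * (s * s)).
  { assert (0 <= 16 * delta * T * s) by nra. simpl. nra. }
  rewrite Hs2 in E6. assert (INR N <= 512 * T ^ 3 * delta ^ 2) by (simpl in *; nra).
  lra.
Qed.

Lemma SL_sum p N c M : SL p N c M = sumR (lfac p N c) M.
Proof. induction M; simpl; auto. rewrite IHM. auto. Qed.

Lemma exp_le' x y : x <= y -> exp x <= exp y.
Proof. intros [H|H]. left; apply exp_increasing; auto. subst; lra. Qed.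

Theorem proposition3p2 :
  forall (p : nat -> nat) (delta : R) (phi : nat -> R),
    (forall i, (p i < p (S i))%nat) ->
    (forall n : nat, prime (Z.of_nat n) <-> exists i, p i = n) ->
    0 < delta ->
    (forall N, (1 <= N)%nat -> is_phi delta N (phi N)) ->
    forall eps, 0 < eps ->
      exists N0 : nat, forall N, (N0 <= N)%nat ->
        exists l, Un_cv (fun M => probM p N M (ln (phi N))) l /\
                  1 - exp (- delta) - eps <= l.
Proof.
  intros p delta phi Hinc Hpr Hd Hphi eps He.
  assert (Hp1 : forall i, 1 <= INR (p i)).
  { intros i. pose proof (p_ge2 p Hpr i). apply (le_INR 1). lia. }
  destruct NT_final as [X0 [HX0 HNT]].
  set (T := 25 + X0).
  destruct (phi_large delta T Hd ltac:(unfold T; lra)) as [N1 [HN1 Hlarge]].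
  exists (Nat.max N1 25). intros N HN.
  set (v := phi N).
  assert (Hphi' : is_phi delta N v) by (apply Hphi; lia).
  assert (HTv : T * INR N <= v) by (apply Hlarge; auto; lia).
  assert (HN25 : 25 <= INR N) by (replace 25 with (INR 25) by (simpl; ring); apply le_INR; lia).
  assert (Hv1 : X0 <= v) by (unfold T in HTv; nra).
  assert (Hv25 : 25 * INR N <= v) by (unfold T in HTv; nra).
  pose proof (IntPart.phi_bounds delta N v Hphi') as [Hup _].
  destruct Hphi' as [Hv _].
  assert (Hlv : 0 < ln v) by (rewrite <- ln_1; apply ln_increasing; lra).
  destruct (HNT v Hv1) as [B HB].
  set (c := ln v).
  set (M := S B).
  set (Cc := INR N * (INR N - 1) / 2 * (1 - INR N / v)).
  assert (HCc : 0 <= Cc).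
  { unfold Cc. assert (INR N / v <= 1 / 25).
    { apply Rmult_le_reg_r with v. lra. unfold Rdiv. rewrite Rmult_assoc, Rinv_l by lra. lra. }
    apply Rmult_le_pos; [|lra]. apply Rmult_le_pos; [|lra]. nra. }
  set (F := fun n => if Rle_dec c (ln (INR n)) then Lfun N (/ INR n) else 0).
  assert (HF : forall n, isp n = true -> 0 <= F n /\
     Cc * (if Rle_dec v (INR n) then wq n else 0) <= F n).
  { intros n Hn. pose proof (isp_ge2 n Hn) as Hn2.
    assert (Hn0 : 0 < INR n) by (apply lt_0_INR; lia).
    unfold F. destruct (Rle_dec c (ln (INR n))) as [h|h].
    - assert (Hvn : v <= INR n).
      { destruct (Rle_dec v (INR n)); auto. exfalso. apply Rnot_le_lt in n0.
        pose proof (ln_increasing (INR n) v Hn0 n0). unfold c in h. lra. }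
      destruct (Rle_dec v (INR n)); [|contradiction].
      unfold Lfun, Cc, wq.
      assert (Hw : / INR n <= / v) by (apply Rinv_le_contravar; lra).
      assert (Hw0 : 0 < / INR n) by (apply Rinv_0_lt_compat; auto).
      assert (E : (/ INR n) ^ 2 = / (INR n * INR n)) by (simpl; field; lra).
      rewrite E. assert (Hq : 0 < / (INR n * INR n)) by (apply Rinv_0_lt_compat; nra).
      assert (HNN : 0 <= INR N * (INR N - 1) / 2) by nra.
      assert (H1 : 1 - INR N / v <= 1 - INR N * / INR n).
      { unfold Rdiv. assert (INR N * / INR n <= INR N * / v) by (apply Rmult_le_compat_l; lra). lra. }
      assert (H2 : 0 <= 1 - INR N / v).
      { assert (INR N / v <= 1 / 25). { apply Rmult_le_reg_r with v. lra. unfold Rdiv. rewrite Rmult_assoc, Rinv_l by lra. lra. } lra. }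
      split.
      + apply Rmult_le_pos; [apply Rmult_le_pos; lra|]. lra.
      + assert (0 <= INR N * (INR N - 1) / 2 * / (INR n * INR n) * ((1 - INR N * / INR n) - (1 - INR N / v)))
          by (apply Rmult_le_pos; [apply Rmult_le_pos; lra | lra]).
        nra.
    - destruct (Rle_dec v (INR n)) as [h2|h2].
      + exfalso. apply h. unfold c. apply ln_le; lra.
      + lra. }
  assert (HSL : delta <= SL p N c M).
  { rewrite SL_sum. unfold lfac. fold c.
    change (sumR (fun m => if Rle_dec c (ln (INR (p m))) then Lfun N (/ INR (p m)) else 0) M)
      with (sumR (fun m => F (p m)) M).
    rewrite <- (enum_sum p Hinc Hpr F M).
    set (h := fun n => if isp n then F n else 0).
    assert (Hh0 : forall n, 0 <= h n) by (intros n; unfold h; destruct (isp n) eqn:E; [apply HF; auto | lra]).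
    assert (Hm : sumR h (S B) <= sumR h (p M)) by (apply sumR_mono; auto; pose proof (p_ge_id p Hinc M); unfold M in *; lia).
    rewrite sumR_shift in Hm.
    assert (Hm2 : Cc * sumR (fun n => if Rle_dec v (INR (S n)) then (if isp (S n) then wq (S n) else 0) else 0) B
                  <= sumR (fun n => h (S n)) B).
    { rewrite <- sumR_scal. apply sumR_le. intros n _. unfold h. destruct (isp (S n)) eqn:E.
      - destruct (HF (S n) E) as [_ Hc]. destruct (Rle_dec v (INR (S n))); lra.
      - destruct (Rle_dec v (INR (S n))); lra. }
    pose proof (Hh0 0%nat).
    assert (Hfin : Cc * (11 / 20 / (v * ln v)) <= Cc * sumR (fun n => if Rle_dec v (INR (S n)) then (if isp (S n) then wq (S n) else 0) else 0) B)
      by (apply Rmult_le_compat_l; auto).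
    assert (Hkey : INR N ^ 2 / (4 * v * ln v) <= Cc * (11 / 20 / (v * ln v))).
    { unfold Cc. assert (Hvl : 0 < v * ln v) by nra.
      replace (INR N ^ 2 / (4 * v * ln v)) with (INR N ^ 2 / 4 * / (v * ln v)) by (field; lra).
      replace (INR N * (INR N - 1) / 2 * (1 - INR N / v) * (11 / 20 / (v * ln v)))
        with (INR N * (INR N - 1) / 2 * (1 - INR N / v) * (11 / 20) * / (v * ln v)) by (field; lra).
      apply Rmult_le_compat_r. left; apply Rinv_0_lt_compat; auto.
      assert (INR N / v <= 1 / 25). { apply Rmult_le_reg_r with v. lra. unfold Rdiv. rewrite Rmult_assoc, Rinv_l by lra. lra. }
      assert (INR N - 1 >= 24 / 25 * INR N) by lra.
      assert (INR N * (INR N - 1) >= 24 / 25 * INR N ^ 2) by (simpl; nra).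
      assert (0 <= INR N * (INR N - 1)) by nra.
      assert (INR N * (INR N - 1) * (1 - INR N / v) >= INR N * (INR N - 1) * (24 / 25)) by (apply Rle_ge; apply Rmult_le_compat_l; lra).
      assert (0 <= INR N ^ 2) by (apply pow_le; lra).
      nra. }
    lra. }
  assert (HP : 1 - exp (- delta) <= probM p N M c).
  { pose proof (probM_lower_exp p Hp1 N c M). pose proof (exp_le' (- SL p N c M) (- delta) ltac:(lra)). lra. }
  assert (Hg : Un_growing (fun M => probM p N M c)) by (intros m; apply probM_mono; auto).
  assert (Hb : has_ub (fun M => probM p N M c)).
  { exists 1. intros x [m ->]. apply probM_le1; auto. }
  destruct (growing_cv _ Hg Hb) as [l Hl].
  exists l. split. exact Hl.
  pose proof (growing_ineq _ l Hg Hl M). simpl in *. lra.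
Qed.
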